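(* For every lattice point $p\in\mathbb Z^n$: $p\in P_G^{-}(y_1,\dots,y_m)$ if and only if $p+e_1$ is a good point of $P_G(y_1,\dots,y_m)$.
   Context: Let $m,n$ be positive integers and $G\subseteq K_{m,n}$ a bipartite graph without isolated vertices, with left vertices $1,\dots,m$ and right vertices $\bar1,\dots,\bar n$. For $i\in[m]$ let $I_i\subseteq[n]$ be the set of $j$ with $(i,\bar j)$ an edge of $G$. For $I\subseteq[n]$ let $\Delta_I=\mathrm{conv}(e_k:k\in I)\subset\mathbb R^n$. For nonnegative integers $y_1,\dots,y_m$, $P_G=P_G(y_1,\dots,y_m)=y_1\Delta_{I_1}+\cdots+y_m\Delta_{I_m}$ (Minkowski sum); it lies in the hyperplane $H=\{x:\sum_kx_k=\sum_jy_j\}$. The trimmed generalized permutohedron is $P_G^-(y_1,\dots,y_m)=\{x\in\mathbb R^n: x+\Delta_{[n]}\subseteq P_G\}$. Fix $c>0$ sufficiently large and let $\infty_1=(\sum_jy_j+(n-1)c,-c,\dots,-c)\in H$. For a polytope $Q\subseteq H$, a facet $F$ of $Q$ is negative if the hyperplane (inside $H$) defining $F$ separates $\infty_1$ from the interior of $Q$, and positive otherwise. A point of $Q$ is good if it lies on no positive facet of $Q$.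
   Formalization: P_G(y₁,…,yₘ) is further required to have nonempty interior relative to the hyperplane H, that is, to be full-dimensional inside H. The statement above fails without it. *)

(* Defs.v *)
From HB Require Import structures.
From mathcomp Require Import all_boot all_order all_algebra.
From mathcomp Require Import reals.
Set Implicit Arguments. Unset Strict Implicit. Unset Printing Implicit Defensive.
Import Order.TTheory GRing.Theory Num.Theory.
Local Open Scope ring_scope.

Section Defs.
Variable R : realType.

(* Points of R^n are functions 'I_n -> R; coordinate k : 'I_n is the
   paper's coordinate k+1 (so e_1 is the coordinate with val k = 0). *)

Definition dotp n (a x : 'I_n -> R) : R := \sum_k a k * x k.

Definition in_simplex n (I : pred 'I_n) (d : 'I_n -> R) : Prop :=
  (forall k, 0 <= d k) /\ (forall k, ~~ I k -> d k = 0) /\ \sum_k d k = 1.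

(* G given by its edge relation E i k  <=>  (i, \bar k) is an edge; I_i = E i *)
Definition no_isolated m n (E : 'I_m -> 'I_n -> bool) : Prop :=
  (forall i, exists k, E i k) /\ (forall k, exists i, E i k).

(* P_G(y) = y_1 Delta_{I_1} + ... + y_m Delta_{I_m} (Minkowski sum) *)
Definition PG m n (E : 'I_m -> 'I_n -> bool) (y : 'I_m -> nat)
    (x : 'I_n -> R) : Prop :=
  exists d : 'I_m -> 'I_n -> R,
    (forall i, in_simplex (E i) (d i)) /\
    (forall k, x k = \sum_i (y i)%:R * d i k).

Definition PGminus m n (E : 'I_m -> 'I_n -> bool) (y : 'I_m -> nat)
    (x : 'I_n -> R) : Prop :=
  forall d : 'I_n -> R, in_simplex predT d -> PG E y (fun k => x k + d k).

Definition inH n (s : R) (x : 'I_n -> R) : Prop := \sum_k x k = s.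

Definition interiorH n (s : R) (Q : ('I_n -> R) -> Prop) (z : 'I_n -> R) : Prop :=
  inH s z /\ exists eps : R, 0 < eps /\
    forall w, inH s w -> (forall k, `|w k - z k| < eps) -> Q w.

Definition affdim_ge n (F : ('I_n -> R) -> Prop) (d : nat) : Prop :=
  exists (x0 : 'I_n -> R) (X : 'I_d -> 'I_n -> R),
    F x0 /\ (forall j, F (X j)) /\
    \rank (\matrix_(j < d, k < n) (X j k - x0 k)) = d.

Definition affdim_eq n (F : ('I_n -> R) -> Prop) (d : nat) : Prop :=
  affdim_ge F d /\ ~ affdim_ge F d.+1.

(* {x in H : a.x = b} is a hyperplane inside H (a not parallel to (1,..,1)),
   a.x <= b is valid on Q and Q \cap {a.x = b} is a facet of Q, i.e. a face of
   dimension dim H - 1 = n - 2. *)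
Definition facet_ineq n (Q : ('I_n -> R) -> Prop) (a : 'I_n -> R) (b : R) : Prop :=
  (exists k1 k2, a k1 != a k2) /\
  (forall x, Q x -> dotp a x <= b) /\
  affdim_eq (fun x => Q x /\ dotp a x = b) n.-2.

Definition separates n (p : 'I_n -> R) (S : ('I_n -> R) -> Prop)
    (a : 'I_n -> R) (b : R) : Prop :=
  (b < dotp a p /\ forall z, S z -> dotp a z < b) \/
  (dotp a p < b /\ forall z, S z -> b < dotp a z).

Definition infty1 n (s c : R) : 'I_n -> R :=
  fun k => if val k == 0%N then s + (n.-1)%:R * c else - c.

Definition positive_facet n (s : R) (Q : ('I_n -> R) -> Prop) (pinf : 'I_n -> R)
    (a : 'I_n -> R) (b : R) : Prop :=
  facet_ineq Q a b /\ ~ separates pinf (interiorH s Q) a b.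

Definition good_point n (s : R) (Q : ('I_n -> R) -> Prop) (pinf : 'I_n -> R)
    (x : 'I_n -> R) : Prop :=
  Q x /\ ~ (exists a b, positive_facet s Q pinf a b /\ dotp a x = b).

Definition sumy m (y : 'I_m -> nat) : R := \sum_i (y i)%:R.

End Defs.

(* Main.v *)
Require Import Defs.
From HB Require Import structures.
From mathcomp Require Import all_boot all_order all_algebra.
From mathcomp Require Import reals.
From mathcomp Require Import boolp classical_sets topology normedtype derive.
From mathcomp Require Import ring lra zify.
From mathcomp Require Import fintype finset.
Import Order.TTheory GRing.Theory Num.Theory.
Import numFieldNormedType.Exports.
Local Open Scope ring_scope.

Set Implicit Arguments. Unset Strict Implicit. Unset Printing Implicit Defensive.

Section Basic.
Variables (R : realType) (m n : nat) (E : 'I_m -> 'I_n -> bool) (y : 'I_m -> nat).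

Definition isflow (d : 'I_m -> 'I_n -> R) := forall i, in_simplex (E i) (d i).
Definition Phi (d : 'I_m -> 'I_n -> R) (k : 'I_n) : R := \sum_i (y i)%:R * d i k.
Definition touch (S : {set 'I_n}) (i : 'I_m) : bool := [exists j in S, E i j].
Definition fS (S : {set 'I_n}) : R := \sum_i (y i)%:R * (touch S i)%:R.
Definition fclos (d : 'I_m -> 'I_n -> R) (S : {set 'I_n}) :=
  forall i j, (0 < y i)%N -> touch S i -> 0 < d i j -> j \in S.

Lemma flow_ge0 d i j : isflow d -> 0 <= d i j.
Proof. by move=> /(_ i) [h _]. Qed.
Lemma flow_E d i j : isflow d -> d i j != 0 -> E i j.
Proof. move=> /(_ i) [_ [h _]] dn; apply/negPn/negP => /h; exact/eqP. Qed.
Lemma flow_sum d i : isflow d -> \sum_j d i j = 1.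
Proof. by move=> /(_ i) [_ [_ h]]. Qed.

Lemma PG_flow x : PG E y x <-> exists d, isflow d /\ forall k, x k = Phi d k.
Proof. by []. Qed.

Lemma Phi_ge0 d k : isflow d -> 0 <= Phi d k.
Proof. move=> f; apply: sumr_ge0 => i _; apply: mulr_ge0 => //; exact: flow_ge0. Qed.

Lemma sum_Phi d : isflow d -> \sum_k Phi d k = sumy R y.
Proof.
move=> f; rewrite /Phi exchange_big /sumy; apply: eq_bigr => i _.
by rewrite -mulr_sumr flow_sum // mulr1.
Qed.

Lemma sumS_le1 d i (S : {set 'I_n}) : isflow d ->
  \sum_(j in S) d i j <= (touch S i)%:R.
Proof.
move=> f; case t: (touch S i).
  rewrite -(flow_sum i f) [leRHS](bigID (mem S)) /= lerDl.
  by apply: sumr_ge0 => j _; exact: flow_ge0.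
rewrite big1 // => j jS; apply/eqP/negP => /negP dn.
move/negbT: t => /existsP; apply; exists j; rewrite jS; exact: flow_E dn.
Qed.

Lemma VL d (S : {set 'I_n}) : isflow d -> \sum_(j in S) Phi d j <= fS S.
Proof.
move=> f; rewrite /Phi exchange_big /fS; apply: ler_sum => i _.
by rewrite -mulr_sumr ler_wpM2l // sumS_le1.
Qed.

Lemma TL d (S : {set 'I_n}) : isflow d -> fclos d S ->
  \sum_(j in S) Phi d j = fS S.
Proof.
move=> f fc; rewrite /Phi exchange_big /fS; apply: eq_bigr => i _.
rewrite -mulr_sumr; case: (posnP (y i)) => [->|yp]; first by rewrite !mul0r.
congr (_ * _); case t: (touch S i).
  rewrite -(flow_sum i f) [RHS](bigID (mem S)) /= [X in _ = _ + X]big1 ?addr0 //.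
  move=> j jS; apply/eqP/negP => /negP dn.
  have: 0 < d i j by rewrite lt_def dn flow_ge0.
  by move/(fc i j yp t); rewrite (negbTE jS).
rewrite big1 // => j jS; apply/eqP/negP => /negP dn.
move/negbT: t => /existsP; apply; exists j; rewrite jS; exact: flow_E dn.
Qed.

End Basic.

Section Vec.
Variables (R : realType) (n : nat).
Definition ev (k : 'I_n) : 'I_n -> R := fun j => (j == k)%:R.

Lemma sum_ev k : \sum_j ev k j = 1.
Proof. by rewrite (bigD1 k) //= big1 ?addr0 /ev ?eqxx // => j /negbTE ->. Qed.

Lemma dotp_ev (a : 'I_n -> R) k : dotp a (ev k) = a k.
Proof.
rewrite /dotp (bigD1 k) //= big1 ?addr0 /ev ?eqxx ?mulr1 // => j /negbTE ->.
by rewrite mulr0.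
Qed.

Lemma dotpD (a x z : 'I_n -> R) : dotp a (fun j => x j + z j) = dotp a x + dotp a z.
Proof. by rewrite /dotp -big_split; apply: eq_bigr => j _; rewrite mulrDr. Qed.

Lemma dotpZ (a x : 'I_n -> R) t : dotp a (fun j => t * x j) = t * dotp a x.
Proof. by rewrite /dotp mulr_sumr; apply: eq_bigr => j _; rewrite mulrCA. Qed.

Lemma dotpB (a x z : 'I_n -> R) : dotp a (fun j => x j - z j) = dotp a x - dotp a z.
Proof. by rewrite /dotp -sumrB; apply: eq_bigr => j _; rewrite mulrBr. Qed.

Lemma ev_simplex k : in_simplex predT (ev k).
Proof. split; first by move=> j; rewrite /ev ler0n. by split; [move=> j | exact: sum_ev]. Qed.

Lemma ev0E (k0 : 'I_n) : val k0 = 0%N ->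
  (fun k : 'I_n => (if val k == 0%N then 1 else 0) : R) = ev k0.
Proof.
move=> h; apply: funext => j; rewrite /ev -h.
by case: (j =P k0) => [->|/eqP]; rewrite ?eqxx // -(inj_eq val_inj) => /negbTE ->.
Qed.

Lemma sum_infty1 (k0 : 'I_n) (s c : R) : val k0 = 0%N ->
  \sum_j infty1 (n:=n) s c j = s.
Proof.
move=> h; rewrite (bigD1 k0) //= /infty1 h eqxx.
rewrite (eq_bigr (fun=> - c)); last first.
  by move=> j jk; rewrite -h (inj_eq val_inj) (negbTE jk).
rewrite sumr_const cardC1 card_ord mulNrn -mulr_natl; lra.
Qed.

Definition mv (x : 'I_n -> R) t (k1 k2 : 'I_n) : 'I_n -> R :=
  fun j => x j + t * (ev k1 j - ev k2 j).

Lemma dotp_mv a x t k1 k2 : dotp a (mv x t k1 k2) = dotp a x + t * (a k1 - a k2).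
Proof. by rewrite /mv dotpD dotpZ dotpB !dotp_ev. Qed.

Lemma sum_mv x t k1 k2 : \sum_j mv x t k1 k2 j = \sum_j x j.
Proof.
have := dotp_mv (fun=> 1) x t k1 k2; rewrite subrr mulr0 addr0 /dotp.
by under eq_bigr do rewrite mul1r; under [X in _ = X -> _]eq_bigr do rewrite mul1r.
Qed.

Lemma mv_close x t k1 k2 j : `|mv x t k1 k2 j - x j| <= `|t|.
Proof.
rewrite /mv addrC addKr normrM /ev.
case: (j == k1); case: (j == k2); rewrite ?subrr ?normr0 ?mulr0 ?normr_ge0 //=
  ?subr0 ?sub0r ?normrN normr1 mulr1 //.
Qed.

End Vec.
Arguments ev {R n} k j.
Arguments mv {R n} x t k1 k2 j.

Section Forward.
Variables (R : realType) (m n : nat) (E : 'I_m -> 'I_n -> bool) (y : 'I_m -> nat).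

Lemma interior_in s Q (z : 'I_n -> R) : interiorH s Q z -> Q z.
Proof.
move=> [hz [e [e0 he]]]; apply: he => // k; by rewrite subrr normr0.
Qed.

Lemma interior_strict s Q (z : 'I_n -> R) a b :
  (exists k1 k2, a k1 != a k2) -> (forall x, Q x -> dotp a x <= b) ->
  interiorH s Q z -> dotp a z < b.
Proof.
move=> [k1 [k2 ne]] val hz; have zQ := interior_in hz.
move: hz => [hzH [e [e0 he]]].
wlog lt12 : k1 k2 ne / a k2 < a k1.
  move=> W; case: (ltgtP (a k2) (a k1)) => h; first exact: (W k1 k2).
    by apply: (W k2 k1) => //; rewrite eq_sym.
  by rewrite h eqxx in ne.
rewrite lt_neqAle val // andbT; apply/eqP => eqb.
have wQ : Q (mv z (e / 2) k1 k2).
  apply: he; first by rewrite /inH sum_mv.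
  move=> k; apply: le_lt_trans (mv_close _ _ _ _ _) _.
  rewrite ger0_norm; last by rewrite divr_ge0 // ltW.
  lra.
have := val _ wQ; rewrite dotp_mv eqb -lerBrDl subrr.
rewrite pmulr_rle0; last by lra.
by rewrite subr_le0 leNgt lt12.
Qed.

Lemma forward (c : R) (k0 : 'I_n) (p : 'I_n -> R) z : 0 < c -> val k0 = 0%N ->
  interiorH (sumy R y) (PG E y) z ->
  PGminus E y p ->
  good_point (sumy R y) (PG E y) (infty1 (sumy R y) c)
        (fun k => p k + (if val k == 0%N then 1 else 0)).
Proof.
move=> c0 hk0 hz hm.
have -> : (fun k : 'I_n => p k + (if val k == 0%N then 1 else 0)) = (fun k => p k + ev k0 k).
  by apply: funext => k; rewrite -(ev0E R hk0).
have PGe k : PG E y (fun j => p j + ev k j) by apply: hm; exact: ev_simplex.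
split; first exact: PGe.
move=> [a [b [[[nc [val _]] nsep] onb]]]; apply: nsep; left; split; last first.
  by move=> z' hz'; exact: interior_strict hz'.
have ak k : a k <= a k0.
  have := val _ (PGe k); rewrite dotpD dotp_ev -onb dotpD dotp_ev; lra.
have [dq [fq qE]] := PGe k0.
set q := (fun j => p j + ev k0 j) in onb qE.
have qE' : forall j, q j = Phi y dq j := qE.
have sq : \sum_j q j = sumy R y.
  by rewrite (eq_bigr _ (fun j _ => qE j)); exact: sum_Phi.
have key : dotp a (infty1 (sumy R y) c) - b =
    \sum_j (a k0 - a j) * (c + q j).
  rewrite -onb -dotpB /dotp.
  have -> : \sum_j a j * (infty1 (sumy R y) c j - q j) =
     \sum_j (a j - a k0) * (infty1 (sumy R y) c j - q j).
    under [RHS]eq_bigr do rewrite mulrBl.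
    rewrite sumrB -mulr_sumr sumrB sq (sum_infty1 _ _ hk0) subrr mulr0 subr0 //.
  apply: eq_bigr => j _; case: (j =P k0) => [->|/eqP jk]; first by rewrite !subrr !mul0r.
  rewrite /infty1 -hk0 (inj_eq val_inj) (negbTE jk); lra.
move: nc => [k1 [k2 ne]].
have [k3 lt3] : exists k3, a k3 < a k0.
  case: (ltrP (a k1) (a k0)) => h1; first by exists k1.
  exists k2; rewrite lt_neqAle ak andbT; apply: contra ne => /eqP ->.
  by rewrite eq_le h1 ak.
rewrite -subr_gt0 key (bigD1 k3) //=; apply: ltr_pwDl.
  apply: mulr_gt0; first by rewrite subr_gt0.
  rewrite (qE' k3); have := Phi_ge0 y k3 fq; lra.
apply: sumr_ge0 => j _; apply: mulr_ge0; first by rewrite subr_ge0.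
rewrite (qE' j); have := Phi_ge0 y j fq; lra.
Qed.

End Forward.

Section Cont.
Variables (R : realType) (N : nat).
Local Open Scope classical_set_scope.
Implicit Types (f g : 'rV[R]_N -> R).

Lemma cont_coord idx : continuous (fun v : 'rV[R]_N => v ord0 idx).
Proof. exact: coord_continuous. Qed.

Lemma cont_add f g : continuous f -> continuous g -> continuous (fun v => f v + g v).
Proof. by move=> cf cg x; apply: continuousD; [exact: cf | exact: cg]. Qed.

Lemma cont_mul f g : continuous f -> continuous g -> continuous (fun v => f v * g v).
Proof. by move=> cf cg x; apply: continuousM; [exact: cf | exact: cg]. Qed.

Lemma cont_cst (a : R) : continuous (fun _ : 'rV[R]_N => a).
Proof. exact: cst_continuous. Qed.

Lemma cont_opp f : continuous f -> continuous (fun v => - f v).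
Proof. move=> cf; have := cont_mul (cont_cst (a:=-1)) cf; by under eq_fun do rewrite mulN1r. Qed.

Lemma cont_sum (I : Type) (r : seq I) (P : pred I) (F : I -> 'rV[R]_N -> R) :
  (forall i, continuous (F i)) -> continuous (fun v => \sum_(i <- r | P i) F i v).
Proof.
move=> cF; elim: r => [|a r IH].
  by under eq_fun do rewrite big_nil; exact: cont_cst.
under eq_fun do rewrite big_cons; case: (P a) => //.
exact: cont_add.
Qed.

Lemma closed_cond (T : Type) (g : T -> 'rV[R]_N -> R) (C : T -> set R) :
  (forall a, continuous (g a)) -> (forall a, closed (C a)) ->
  closed [set v | forall a, C a (g a v)].
Proof.
move=> cg cC.
have -> : [set v | forall a, C a (g a v)] = (\bigcap_(a in classical_sets.setT) (g a @^-1` C a))%classic.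
  apply/seteqP; split => v /= h.
    by move=> a _; exact: h.
  by move=> a; exact: h.
apply: closed_bigI => a _; apply: preimage_closed => //.
Qed.

End Cont.

Section MX.
Variables (R : realType) (m n : nat) (E : 'I_m -> 'I_n -> bool) (y : 'I_m -> nat).
Local Open Scope classical_set_scope.

Definition dv (v : 'rV[R]_(m * n)) : 'I_m -> 'I_n -> R :=
  fun i j => v ord0 (mxvec_index i j).

Definition vd (d : 'I_m -> 'I_n -> R) : 'rV[R]_(m * n) := mxvec (\matrix_(i, j) d i j).

Lemma dv_vd d : dv (vd d) = d.
Proof. by apply: funext => i; apply: funext => j; rewrite /dv /vd mxvecE mxE. Qed.

Lemma cont_Phi j : continuous (fun v => Phi y (dv v) j).
Proof.
rewrite /Phi; apply: cont_sum => i; apply: cont_mul; first exact: cont_cst.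
exact: cont_coord.
Qed.

Lemma flow_le1 (d : 'I_m -> 'I_n -> R) i j : isflow E d -> d i j <= 1.
Proof.
move=> f; rewrite -(flow_sum i f) (bigD1 j) //= lerDl.
by apply: sumr_ge0 => l _; exact: flow_ge0.
Qed.

Variables (q : 'I_n -> R) (k k0 : 'I_n).

Definition Aset : set 'rV[R]_(m * n) :=
  [set v | forall ij : 'I_m * 'I_n, [set x : R | 0 <= x] (dv v ij.1 ij.2)] `&`
  [set v | forall ij : 'I_m * 'I_n, [set x : R | x = 0] ((~~ E ij.1 ij.2)%:R * dv v ij.1 ij.2)] `&`
  [set v | forall i : 'I_m, [set x : R | x = 1] (\sum_j dv v i j)] `&`
  [set v | forall j : 'I_n, [set x : R | x = 0] (((j != k) && (j != k0))%:R * (Phi y (dv v) j + - q j))] `&`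
  [set v | forall _ : unit, [set x : R | x = q k + q k0] (Phi y (dv v) k + Phi y (dv v) k0)] `&`
  [set v | forall _ : unit, [set x : R | q k <= x] (Phi y (dv v) k)] `&`
  [set v | forall _ : unit, [set x : R | x <= q k + 1] (Phi y (dv v) k)].

Lemma Aset_closed : closed Aset.
Proof.
repeat apply: closedI.
- apply: (@closed_cond _ _ _ (fun ij v => dv v ij.1 ij.2) (fun _ => [set x : R | 0 <= x])).
    by move=> ij; exact: cont_coord.
  by move=> ?; exact: closed_ge.
- apply: (@closed_cond _ _ _ (fun ij v => (~~ E ij.1 ij.2)%:R * dv v ij.1 ij.2) (fun _ => [set x : R | x = 0])).
    by move=> ij; apply: cont_mul; [exact: cont_cst | exact: cont_coord].
  by move=> ?; exact: closed_eq.
- apply: (@closed_cond _ _ _ (fun i v => \sum_j dv v i j) (fun _ => [set x : R | x = 1])).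
    by move=> i; apply: cont_sum => j; exact: cont_coord.
  by move=> ?; exact: closed_eq.
- apply: (@closed_cond _ _ _ (fun j v => ((j != k) && (j != k0))%:R * (Phi y (dv v) j + - q j)) (fun _ => [set x : R | x = 0])).
    move=> j; apply: cont_mul; first exact: cont_cst.
    by apply: cont_add; [exact: cont_Phi | exact: cont_cst].
  by move=> ?; exact: closed_eq.
- apply: (@closed_cond _ _ _ (fun _ v => Phi y (dv v) k + Phi y (dv v) k0) (fun _ => [set x : R | x = q k + q k0])).
    by move=> _; apply: cont_add; exact: cont_Phi.
  by move=> ?; exact: closed_eq.
- apply: (@closed_cond _ _ _ (fun _ v => Phi y (dv v) k) (fun _ => [set x : R | q k <= x])).
    by move=> _; exact: cont_Phi.
  by move=> ?; exact: closed_ge.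
- apply: (@closed_cond _ _ _ (fun _ v => Phi y (dv v) k) (fun _ => [set x : R | x <= q k + 1])).
    by move=> _; exact: cont_Phi.
  by move=> ?; exact: closed_le.
Qed.

Lemma AsetP v : Aset v <->
  [/\ isflow E (dv v), (forall j, j != k -> j != k0 -> Phi y (dv v) j = q j),
      Phi y (dv v) k + Phi y (dv v) k0 = q k + q k0 &
      q k <= Phi y (dv v) k <= q k + 1].
Proof.
split.
  move=> [[[[[[h1 h2] h3] h4] h5] h6] h7]; split.
  - move=> i; split; first by move=> j; exact: (h1 (i, j)).
    split; last exact: h3.
    by move=> j hE; have := h2 (i, j); rewrite /= hE mul1r.
  - by move=> j a b; have /eqP := h4 j; rewrite /= a b mul1r subr_eq0 => /eqP.
  - exact: h5 tt.
  - by apply/andP; split; [exact: h6 tt | exact: h7 tt].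
move=> [f h4 h5 /andP[h6 h7]].
refine (conj (conj (conj (conj (conj (conj _ _) _) _) _) _) _) => //.
- by move=> [i j]; exact: flow_ge0.
- by move=> [i j] /=; case hE: (E i j) => /=; rewrite ?mul0r // mul1r;
     have [_ [h _]] := f i; apply: h; rewrite hE.
- by move=> i; exact: flow_sum.
- move=> j /=; case: (j =P k) => [->|/eqP a] /=; first by rewrite mul0r.
  by case: (j =P k0) => [->|/eqP b] /=; rewrite ?mul0r // mul1r h4 // subrr.
Qed.

Lemma MX dq : isflow E dq -> (forall j, q j = Phi y dq j) -> k != k0 ->
  exists t d, [/\ 0 <= t <= 1, isflow E d, (forall j, Phi y d j = mv q t k k0 j) &
    forall t' d', t < t' -> t' <= 1 -> isflow E d' ->
       ~ (forall j, Phi y d' j = mv q t' k k0 j)].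
Proof.
move=> fq qE kk0.
have k0k : k0 != k by rewrite eq_sym.
have mvk t : mv q t k k0 k = q k + t by rewrite /mv /ev eqxx (negbTE kk0) /=; lra.
have mvk0 t : mv q t k k0 k0 = q k0 - t by rewrite /mv /ev eqxx (negbTE k0k) /=; lra.
have mvj t j : j != k -> j != k0 -> mv q t k k0 j = q j.
  by move=> a b; rewrite /mv /ev (negbTE a) (negbTE b) subrr mulr0 addr0.
have inA t d : 0 <= t <= 1 -> isflow E d -> (forall j, Phi y d j = mv q t k k0 j) ->
    Aset (vd d).
  move=> /andP[t0 t1] f h; apply/AsetP; rewrite dv_vd; split=> //.
  - by move=> j a b; rewrite h mvj.
  - by rewrite !h mvk mvk0; lra.
  - by rewrite h mvk; apply/andP; split; lra.
have A0 : (Aset !=set0)%classic.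
  exists (vd dq); apply: (inA 0) => //; first by rewrite lexx ler01.
  by move=> j; rewrite -qE /mv mul0r addr0.
have cA : compact Aset.
  have cB := (@rV_compact _ _ (fun _ : 'I_(m * n) => (`[(0:R), 1])%classic) (fun _ => @segment_compact R 0 1)).
  have := subclosed_compact Aset_closed cB.
  apply.
  move=> v /AsetP [f _ _ _] idx /=; case/mxvec_indexP: idx => i j.
  rewrite in_itv /=; apply/andP; split; [exact: (flow_ge0 i j f) | exact: (flow_le1 i j f)].
have [c cin cmax] := compact_EVT_max A0 cA (continuous_subspaceT (cont_Phi (j:=k))).
have /AsetP [fc c1 c2 /andP[c3 c4]] := set_mem cin.
exists (Phi y (dv c) k - q k), (dv c); split=> //.
- by apply/andP; split; lra.
- move=> j; case: (j =P k) => [->|/eqP a]; first by rewrite mvk; lra.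
  case: (j =P k0) => [->|/eqP b]; first by rewrite mvk0; lra.
  by rewrite mvj // c1.
move=> t' d' lt1 le1 f' h'.
have := cmax (vd d') (mem_set (inA t' d' _ f' h')); rewrite dv_vd h' mvk.
have : 0 <= t' <= 1 by apply/andP; split; lra.
move=> /[dup] H /inA /(_ f' h') _; lra.
Qed.

End MX.

Section Push.
Variables (R : realType) (m n : nat) (E : 'I_m -> 'I_n -> bool) (y : 'I_m -> nat).
Variables (d : 'I_m -> 'I_n -> R) (k : 'I_n).

Inductive reach : 'I_n -> Prop :=
| reach0 : reach k
| reachS j i j' : reach j -> E i j -> (0 < y i)%N -> 0 < d i j' -> reach j'.

Lemma ev_diff_norm (j j' b : 'I_n) : `|ev j b - ev j' b : R| <= 1.
Proof.
rewrite /ev; case: (b == j); case: (b == j') => /=;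
  rewrite ?subrr ?normr0 ?ler01 ?subr0 ?sub0r ?normrN ?normr1 //.
Qed.

Lemma sum_evB (j j' : 'I_n) : \sum_b (ev j b - ev j' b : R) = 0.
Proof. by rewrite sumrB !sum_ev subrr. Qed.

Lemma push j : isflow E d -> reach j ->
  exists C eps, [/\ 0 <= C, 0 < eps & forall del, 0 <= del -> del <= eps ->
    exists d', [/\ isflow E d', (forall a b, `|d' a b - d a b| <= C * del) &
       forall l, Phi y d' l = mv (Phi y d) del k j l]].
Proof.
move=> fd; elim=> [|j0 i j' _ [C [eps [C0 e0 H]]] Eij yi dij'].
  exists 0, 1; split=> // del _ _; exists d; split=> //.
    by move=> a b; rewrite subrr normr0 mul0r.
  by move=> l; rewrite /mv subrr mulr0 addr0.
set w : R := ((y i)%:R)^-1.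
have w0 : 0 < w by rewrite invr_gt0 ltr0n.
have yw : (y i)%:R * w = 1 by rewrite mulfV // pnatr_eq0 -lt0n.
have Cw : 0 < C + w by lra.
exists (C + w), (Num.min eps (d i j' / (C + w))); split.
- lra.
- by rewrite lt_min e0 divr_gt0.
move=> del del0; rewrite le_min => /andP[dle dle'].
have [d' [f' b' P']] := H del del0 dle.
have Eij' : E i j' by apply: (flow_E fd); rewrite gt_eqF.
have hdel : (C + w) * del <= d i j' by rewrite mulrC -ler_pdivlMr.
exists (fun a b => d' a b + (a == i)%:R * (del * w) * (ev j0 b - ev j' b)); split.
- move=> a; split; [|split].
  + move=> b; case: (a =P i) => [->|_]; last by rewrite mul0r mul0r addr0 (flow_ge0 _ _ f').
    rewrite mul1r; case: (b =P j') => [->|/eqP bj'].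
      have := b' i j'; rewrite ler_norml => /andP[h1 _].
      rewrite /ev eqxx; case: (j' == j0) => /=; nra.
    rewrite /ev (negbTE bj') subr0; apply: addr_ge0; first exact: (flow_ge0 _ _ f').
    by apply: mulr_ge0; [nra | case: (b == j0)].
  + move=> b nE; have [_ [h _]] := f' a; rewrite h //.
    case: (a =P i) => [ai|_]; last by rewrite mul0r mul0r addr0.
    subst a; rewrite /ev.
    have -> : (b == j0) = false by apply/negP => /eqP bj; rewrite bj Eij in nE.
    have -> : (b == j') = false by apply/negP => /eqP bj; rewrite bj Eij' in nE.
    by rewrite subrr mulr0 addr0.
  + rewrite big_split /= -mulr_sumr sum_evB mulr0 addr0; exact: (flow_sum a f').
- move=> a b; rewrite addrAC; apply: le_trans (ler_normD _ _) _.
  rewrite mulrDl; apply: lerD; first exact: b'.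
  rewrite normrM normrM; case: (a == i) => /=.
    rewrite normr1 mul1r ger0_norm; last by apply: mulr_ge0 => //; exact: ltW.
    rewrite [w * del]mulrC -[X in _ <= X]mulr1; apply: ler_wpM2l; last exact: ev_diff_norm.
    by apply: mulr_ge0 => //; exact: ltW.
  by rewrite normr0 !mul0r; apply: mulr_ge0 => //; exact: ltW.
- move=> l; rewrite /Phi.
  under eq_bigr do rewrite mulrDr.
  rewrite big_split /= -/(Phi y d' l) P'.
  rewrite (bigD1 i) //= eqxx big1 ?addr0; last first.
    by move=> a /negbTE ->; rewrite mul0r mul0r mulr0.
  rewrite mul1r mulrA mulrCA yw mulr1 /mv.
  rewrite -/(Phi y d l); ring.
Qed.

End Push.

Section Comb.
Variables (R : realType) (m n : nat) (E : 'I_m -> 'I_n -> bool) (y : 'I_m -> nat).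
Implicit Types (P S J K T : {set 'I_n}) (sel : pred 'I_m).

Definition sepP (P : {set 'I_n}) (sel : pred 'I_m) (S : {set 'I_n}) :=
  forall i, sel i -> (forall j, j \in P -> E i j -> j \in S) \/
                     (forall j, j \in P -> E i j -> j \notin S).
Definition conn (P : {set 'I_n}) (sel : pred 'I_m) :=
  forall S, sepP P sel S -> (forall j, j \in P -> j \in S) \/ (forall j, j \in P -> j \notin S).

Lemma sepC P sel S : sepP P sel S -> sepP P sel (~: S).
Proof.
move=> h i si; case: (h i si) => H; [right|left] => j jP Eij; rewrite in_setC ?negbK;
  exact: H.
Qed.

Lemma conn_intro P sel k : k \in P ->
  (forall S, sepP P sel S -> k \in S -> forall j, j \in P -> j \in S) -> conn P sel.
Proof.
move=> kP H S sS; case kS: (k \in S); first by left; exact: H.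
right=> j jP; have := H _ (sepC sS); rewrite in_setC kS => /(_ isT j jP).
by rewrite in_setC.
Qed.

Lemma sub_card_eq (A B : {set 'I_n}) : A \subset B -> (#|B| <= #|A|)%N -> A = B.
Proof.
move=> sAB h; apply/eqP; rewrite -(subset_leqif_cards sAB).2 eqn_leq h.
by rewrite subset_leq_card.
Qed.

Variables (d : 'I_m -> 'I_n -> R) (k k0 : 'I_n).
Hypothesis fd : isflow E d.
Hypothesis GC : conn [set: 'I_n] (fun i => (0 < y i)%N).

Definition fclosb (S : {set 'I_n}) :=
  [forall i, [forall j, ((0 < y i)%N && touch E S i && (0 < d i j)) ==> (j \in S)]].

Lemma fclosP S : reflect (fclos E y d S) (fclosb S).
Proof.
apply: (iffP idP).
  by move=> /forallP h i j yi ti dij; have /forallP/(_ j) := h i; rewrite yi ti dij.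
move=> h; apply/forallP => i; apply/forallP => j; apply/implyP => /andP[/andP[yi ti] dij].
exact: (h i j yi ti dij).
Qed.

Lemma touchP S i : reflect (exists2 j, j \in S & E i j) (touch E S i).
Proof.
apply: (iffP existsP); first by move=> [j /andP[]]; exists j.
by move=> [j jS Eij]; exists j; rewrite jS.
Qed.

Definition P1 (J : {set 'I_n}) := [&& k \in J, k0 \notin J & fclosb J].

Definition sepKb (J K : {set 'I_n}) :=
  [forall i, ((0 < y i)%N && ~~ touch E J i) ==>
     ([forall j, E i j ==> (j \in K)] || [forall j, E i j ==> (j \notin K)])].

Lemma sepKbP J K i : sepKb J K -> (0 < y i)%N -> ~~ touch E J i ->
  (forall j, E i j -> j \in K) \/ (forall j, E i j -> j \notin K).
Proof.
move=> /forallP /(_ i) h yi ti; move: h; rewrite yi ti /= => /orP [] /forallP h;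
  [left|right] => j; exact: (implyP (h j)).
Qed.

Definition P2 (J K : {set 'I_n}) := [&& k0 \in K, K \subset ~: J & sepKb J K].

Lemma find_facet T : k \in T -> k0 \notin T -> fclos E y d T ->
  exists P : {set 'I_n}, [/\ k \in P, k0 \notin P, fclos E y d P,
    conn P (fun i => (0 < y i)%N && touch E P i) &
    conn (~: P) (fun i => (0 < y i)%N && ~~ touch E P i)].
Proof.
move=> kT k0T fT.
have P1T : P1 T by rewrite /P1 kT k0T; apply/fclosP.
case: (arg_minnP (fun J => #|J|) P1T) => J /and3P [kJ k0J /fclosP fJ] Jmin.
have Jc : conn J (fun i => (0 < y i)%N && touch E J i).
  apply: (conn_intro kJ) => S sS kS.
  suff : J :&: S = J by move=> <- j /setIP [].
  apply: sub_card_eq; first exact: subsetIl.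
  apply: Jmin; rewrite /P1 inE kJ kS /= inE negb_and k0J /=.
  apply/fclosP => i j yi /touchP [j0 /setIP [j0J j0S] Eij0] dij.
  have tJ : touch E J i by apply/touchP; exists j0.
  have jJ := fJ i j yi tJ dij.
  have Eij : E i j by apply: (flow_E fd); rewrite gt_eqF.
  rewrite inE jJ /=; case: (sS i); first by rewrite yi tJ.
    by move=> h; exact: h.
  by move=> h; have := h j0 j0J Eij0; rewrite j0S.
have P2J : P2 J (~: J).
  rewrite /P2 inE k0J subxx /=; apply/forallP => i; apply/implyP => /andP [yi tJ].
  apply/orP; left; apply/forallP => j; apply/implyP => Eij; rewrite inE.
  by apply/negP => jJ; move/negP: tJ; apply; apply/touchP; exists j.
case: (arg_minnP (fun K => #|K|) P2J) => K /and3P [k0K KJ sK] Kmin.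
have KJ' j : j \in K -> j \notin J.
  by move=> jK; have := subsetP KJ j jK; rewrite inE.
have Kc : conn K (fun i => (0 < y i)%N && ~~ touch E J i).
  apply: (conn_intro k0K) => S sS k0S.
  suff : K :&: S = K by move=> <- j /setIP [].
  apply: sub_card_eq; first exact: subsetIl.
  apply: Kmin; rewrite /P2 inE k0K k0S /=; apply/andP; split.
    by apply: subset_trans KJ; exact: subsetIl.
  apply/forallP => i; apply/implyP => /andP [yi tJ]; apply/orP.
  case: (sepKbP sK yi tJ) => hK.
    case: (sS i); first by rewrite yi tJ.
      move=> h; left; apply/forallP => j; apply/implyP => Eij.
      by rewrite inE hK // h // hK.
    move=> h; right; apply/forallP => j; apply/implyP => Eij.
    by rewrite inE negb_and h ?orbT // hK.
  right; apply/forallP => j; apply/implyP => Eij.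
  by rewrite inE negb_and hK.
exists (~: K).
have kK : k \notin K by apply/negP => /KJ'; rewrite kJ.
have JP j : j \in J -> j \in ~: K.
  by move=> jJ; rewrite inE; apply/negP => /KJ'; rewrite jJ.
split.
- by rewrite inE.
- by rewrite inE negbK.
- move=> i j yi tP dij.
  have Eij : E i j by apply: (flow_E fd); rewrite gt_eqF.
  case tJ: (touch E J i); first by apply: JP; exact: (fJ i j yi tJ dij).
  case: (sepKbP sK yi (negbT tJ)) => h.
    by move/touchP: tP => [j0]; rewrite inE => /negP j0K /h.
  by rewrite inE h.
- apply: (conn_intro (P:=~: K) (k:=k)); first by rewrite inE.
  move=> S sS kS.
  have JS : forall j, j \in J -> j \in S.
    case: (Jc S) => [i /andP [yi tJ]| h | h].
    + have tP : touch E (~: K) i.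
        by move/touchP: tJ => [j0 j0J Eij0]; apply/touchP; exists j0 => //; exact: JP.
      case: (sS i); first by rewrite yi tP.
        by move=> h; left => j jJ Eij; apply: h => //; exact: JP.
      by move=> h; right => j jJ Eij; apply: h => //; exact: JP.
    + exact: h.
    + by have := h k kJ; rewrite kS.
  pose Rs := ~: K :\: S.
  case: (GC (S := Rs)).
  + move=> i yi; case: (boolP [exists j, E i j && (j \in Rs)]).
      move=> /existsP [j0 /andP [Eij0]]; rewrite !inE => /andP [j0S j0K].
      have tP : touch E (~: K) i by apply/touchP; exists j0; rewrite ?inE.
      have hS : forall j, j \in ~: K -> E i j -> j \notin S.
        case: (sS i); first by rewrite yi tP.
          by move=> h; have := h j0; rewrite inE j0K => /(_ isT Eij0); rewrite (negbTE j0S).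
        done.
      have tJ : ~~ touch E J i.
        apply/negP => /touchP [j1 j1J Eij1].
        by have := hS j1 (JP j1 j1J) Eij1; rewrite JS.
      case: (sepKbP sK yi tJ) => hK.
        by have := hK j0 Eij0; rewrite (negbTE j0K).
      left => j _ Eij; rewrite !inE hS ?inE ?hK //.
    by move=> /existsPn h; right => j _ Eij; have := h j; rewrite Eij.
  + by move=> h j jP; have := h k0 (in_setT _); rewrite !inE k0K andbF.
  + move=> h j jP; have := h j (in_setT _); rewrite !inE; rewrite inE in jP.
    by rewrite jP andbT negbK.
- rewrite setCK; apply: (conn_intro (P:=K) (k:=k0)) => // S sS k0S.
  case: (Kc S) => [i /andP [yi tJ]| h | h].
  + case: (boolP (touch E K i)) => tK.
      case: (sepKbP sK yi tJ) => hK.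
        have ntP : ~~ touch E (~: K) i.
          by apply/negP => /touchP [j]; rewrite inE => /negP jK /hK.
        by case: (sS i); rewrite ?yi ?ntP //; [left|right].
      by move/touchP: tK => [j jK /hK]; rewrite jK.
    by left => j jK Eij; move/negP: tK; case; apply/touchP; exists j.
  + exact: h.
  + by have := h k0 k0K; rewrite k0S.
Qed.

End Comb.

Section Facet.
Variables (R : realType) (m n : nat) (E : 'I_m -> 'I_n -> bool) (y : 'I_m -> nat).
Variables (P : {set 'I_n}) (k k0 : 'I_n).
Hypotheses (kP : k \in P) (k0P : k0 \notin P).

Definition ind (S : {set 'I_n}) : 'I_n -> R := fun j => (j \in S)%:R.

Lemma dotp_ind S x : dotp (ind S) x = \sum_(j in S) x j.
Proof.
rewrite /dotp [RHS]big_mkcond; apply: eq_bigr => j _; rewrite /ind.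
by case: (j \in S); rewrite ?mul1r ?mul0r.
Qed.

Lemma sum_PG x : PG E y x -> \sum_j x j = sumy R y.
Proof. by move=> [d [f h]]; rewrite (eq_bigr _ (fun j _ => h j)); exact: sum_Phi. Qed.

Definition Fset (x : 'I_n -> R) := PG E y x /\ dotp (ind P) x = fS R E y P.

Definition BT : 'M[R]_(2, n) :=
  \matrix_(c, l) (if c == ord0 then ind P l else ind (~: P) l).

Lemma sum_pick (F : 'I_n -> R) t : \sum_l F l * (l == t)%:R = F t.
Proof.
rewrite (bigD1 t) //= eqxx mulr1 big1 ?addr0 // => l /negbTE ->; by rewrite mulr0.
Qed.

Lemma rank_BT : \rank BT = 2%N.
Proof.
pose sl (c : 'I_2) := if c == ord0 then k else k0.
pose S : 'M[R]_(n, 2) := \matrix_(l, c) (l == sl c)%:R.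
have e : BT *m S = 1%:M.
  apply/matrixP => c c'; rewrite !mxE.
  under eq_bigr do rewrite !mxE.
  rewrite sum_pick /sl /ind.
  case: c => [[|[|//]] hc]; case: c' => [[|[|//]] hc'] /=; rewrite ?inE ?kP ?(negbTE k0P) //.
have := mxrankM_maxl BT S; rewrite e mxrank1 => h.
by apply/eqP; rewrite eqn_leq h rank_leq_row.
Qed.

Lemma UB N x0 (X : 'I_N -> 'I_n -> R) : Fset x0 -> (forall j, Fset (X j)) ->
  (\rank (\matrix_(j, l) (X j l - x0 l)%R) <= n - 2)%N.
Proof.
move=> [x0P x0b] XF.
set M := \matrix_(j, l) (X j l - x0 l).
have h0 : M *m BT^T = 0.
  apply/matrixP => j c; rewrite !mxE.
  under eq_bigr do rewrite !mxE.
  have [XP Xb] := XF j.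
  have e1 : \sum_l (X j l - x0 l) * ind P l = 0.
    have e := dotpB (ind P) (X j) x0; rewrite Xb x0b subrr in e.
    apply: etrans e; rewrite /dotp; apply: eq_bigr => l _; exact: mulrC.
  case: (c == ord0) => //.
  have -> : \sum_l (X j l - x0 l) * ind (~: P) l =
            \sum_l (X j l - x0 l) - \sum_l (X j l - x0 l) * ind P l.
    rewrite -sumrB; apply: eq_bigr => l _; rewrite /ind inE.
    by case: (l \in P) => /=; rewrite ?mulr1 ?mulr0 ?subr0 ?subrr.
  by rewrite e1 subr0 sumrB (sum_PG XP) (sum_PG x0P) subrr.
have := mulmx0_rank_max h0; rewrite mxrank_tr rank_BT; lia.
Qed.

Hypothesis niso : no_isolated E.

Definition A_ (i : 'I_m) : {set 'I_n} := [set j | E i j && ((j \in P) == touch E P i)].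

Lemma A_gt0 i : (0 < #|A_ i|)%N.
Proof.
apply/card_gt0P; case t: (touch E P i).
  by move/touchP: (t) => [j jP Eij]; exists j; rewrite inE Eij jP t.
have [j Eij] := niso.1 i; exists j; rewrite inE Eij t /= eqbF_neg.
by apply/negP => jP; move/negbT/negP: t; apply; apply/touchP; exists j.
Qed.

Lemma A_E i j : j \in A_ i -> E i j.
Proof. by rewrite inE => /andP []. Qed.

Definition d0 (i : 'I_m) (j : 'I_n) : R := (j \in A_ i)%:R / (#|A_ i|)%:R.

Lemma d0_ge0 i j : 0 <= d0 i j.
Proof. by rewrite /d0 divr_ge0 ?ler0n. Qed.

Lemma d0_pos i j : j \in A_ i -> 0 < d0 i j.
Proof. by move=> h; rewrite /d0 h divr_gt0 ?ltr0n ?A_gt0. Qed.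

Lemma d0_supp i j : d0 i j != 0 -> j \in A_ i.
Proof. by rewrite /d0; case: (j \in A_ i) => //; rewrite mul0r eqxx. Qed.

Lemma d0_sum i : \sum_j d0 i j = 1.
Proof.
rewrite /d0 -mulr_suml.
have -> : \sum_j ((j \in A_ i)%:R : R) = #|A_ i|%:R.
  by rewrite -sum1_card natr_sum [RHS]big_mkcond; apply: eq_bigr => j _; case: (j \in A_ i).
by rewrite mulfV // pnatr_eq0 -lt0n A_gt0.
Qed.

Definition dm (t : 'I_m * 'I_n * 'I_n) (a : 'I_m) (b : 'I_n) : R :=
  d0 a b + (a == t.1.1)%:R * ((t.1.2 \in A_ t.1.1) && (t.2 \in A_ t.1.1))%:R
     * d0 t.1.1 t.2 * (ev t.1.2 b - ev t.2 b).

Lemma dm_supp t a b : dm t a b != 0 -> b \in A_ a.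
Proof.
case: t => [[i u] v]; rewrite /dm /=.
case: (a =P i) => [->|_]; last by rewrite mul0r !mul0r addr0; exact: d0_supp.
case: (boolP ((u \in A_ i) && (v \in A_ i))) => [/andP [uA vA]|_];
  last by rewrite mulr0 !mul0r addr0; exact: d0_supp.
rewrite /ev; case: (b =P u) => [->|_] //; case: (b =P v) => [->|_] //.
by rewrite subrr mulr0 addr0; exact: d0_supp.
Qed.

Lemma dm_flow t : isflow E (dm t).
Proof.
case: t => [[i u] v] a; split; [|split].
- move=> b; rewrite /dm /=; case: (a =P i) => [->|_];
    last by rewrite mul0r !mul0r addr0 d0_ge0.
  case: (boolP ((u \in A_ i) && (v \in A_ i))) => _;
    last by rewrite mulr0 !mul0r addr0 d0_ge0.
  rewrite /ev !mul1r; case: (b =P v) => [->|_].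
    by case: (v == u) => /=; rewrite ?subrr ?mulr0 ?addr0 ?d0_ge0 // sub0r mulrN1 subrr.
  rewrite subr0; apply: addr_ge0; first exact: d0_ge0.
  by apply: mulr_ge0; [exact: d0_ge0 | case: (b == u)].
- move=> b nE; apply/eqP/negP => /negP /dm_supp /A_E; by rewrite (negbTE nE).
- rewrite /dm big_split /= -mulr_sumr sumrB !sum_ev subrr mulr0 addr0; exact: d0_sum.
Qed.

Lemma d0_flow : isflow E d0.
Proof.
move=> a; split; [exact: d0_ge0 | split; last exact: d0_sum].
move=> b nE; apply/eqP/negP => /negP /d0_supp /A_E; by rewrite (negbTE nE).
Qed.

Lemma supp_closed (d : 'I_m -> 'I_n -> R) : (forall a b, d a b != 0 -> b \in A_ a) ->
  fclos E y d P.
Proof.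
move=> h i j _ t dij; have := h i j; rewrite gt_eqF // => /(_ isT).
by rewrite inE t => /andP [_ /eqP ->].
Qed.

Lemma Phi_dm t l : Phi y (dm t) l = Phi y d0 l +
  (y t.1.1)%:R * (((t.1.2 \in A_ t.1.1) && (t.2 \in A_ t.1.1))%:R
     * d0 t.1.1 t.2 * (ev t.1.2 l - ev t.2 l)).
Proof.
rewrite /Phi /dm; under eq_bigr do rewrite mulrDr.
rewrite big_split /=; congr (_ + _).
rewrite (bigD1 t.1.1) //= eqxx big1 ?addr0 ?mul1r //.
by move=> a /negbTE ->; rewrite !mul0r mulr0.
Qed.

Lemma Fset_flow d : isflow E d -> (forall a b, d a b != 0 -> b \in A_ a) ->
  Fset (Phi y d).
Proof.
move=> f h; split; first by exists d.
by rewrite dotp_ind; apply: TL => //; exact: supp_closed.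
Qed.

Hypothesis cP : conn E P (fun i => (0 < y i)%N && touch E P i).
Hypothesis cK : conn E (~: P) (fun i => (0 < y i)%N && ~~ touch E P i).

Lemma const_on (w : 'I_n -> R) :
  (forall i u v, (0 < y i)%N -> u \in A_ i -> v \in A_ i -> w u = w v) ->
  forall l, w l = w k * ind P l + w k0 * ind (~: P) l.
Proof.
move=> hw.
have gen (Q : {set 'I_n}) (sel : pred 'I_m) (q : 'I_n) :
    q \in Q -> conn E Q sel ->
    (forall i j, sel i -> j \in Q -> E i j -> (0 < y i)%N /\ j \in A_ i) ->
    forall l, l \in Q -> w l = w q.
  move=> qQ cQ hQ.
  pose S := [set j | w j == w q].
  case: (cQ S).
  - move=> i si.
    case: (boolP [exists j, [&& j \in Q, E i j & j \in S]]).
      move=> /existsP [j1 /and3P [j1Q Ej1 j1S]]; left => j jQ Eij.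
      have [yi jA] := hQ i j si jQ Eij.
      have [_ j1A] := hQ i j1 si j1Q Ej1.
      by rewrite inE (hw i j j1 yi jA j1A); rewrite inE in j1S.
    by move=> /existsPn h; right => j jQ Eij; have := h j; rewrite jQ Eij.
  - by move=> h l lQ; have := h l lQ; rewrite inE => /eqP.
  - by move=> h; have := h q qQ; rewrite inE eqxx.
have hPc := gen P _ k kP cP.
have k0C : k0 \in ~: P by rewrite inE.
have hKc := gen (~: P) _ k0 k0C cK.
move=> l; rewrite /ind inE; case lP: (l \in P) => /=.
  rewrite mulr1 mulr0 addr0; apply: hPc => //.
  move=> i j /andP [yi ti] jP Eij; split=> //; by rewrite inE Eij jP ti.
rewrite mulr0 add0r mulr1; apply: hKc; last by rewrite inE lP.
move=> i j /andP [yi ti] jP Eij; split=> //; rewrite inE Eij; rewrite inE in jP.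
by rewrite (negbTE jP) (negbTE ti).
Qed.

Lemma pick_rows N n' (M : 'M[R]_(N, n')) d : \rank M = d ->
  exists g : 'I_d -> 'I_N, row_free (rowsub g M).
Proof. by move=> <-; exists (maxrankfun M); exact: maxrowsub_free. Qed.

Lemma LB : affdim_ge Fset (n.-2).
Proof.
pose T := ('I_m * 'I_n * 'I_n)%type.
pose x0 := Phi y d0.
pose X (r : 'I_#|{: T}|) := Phi y (dm (enum_val r)).
pose M := \matrix_(r, l) (X r l - x0 l).
have Fx0 : Fset x0 by apply: Fset_flow; [exact: d0_flow | exact: d0_supp].
have FX r : Fset (X r) by apply: Fset_flow; [exact: dm_flow | exact: dm_supp].
have ub := UB Fx0 FX.
have lb : (n - 2 <= \rank M)%N.
  set Kr := kermx M^T.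
  have sK : (Kr <= BT)%MS.
    apply/row_subP => r0; set w := row r0 Kr.
    have w0 : w *m M^T = 0 by apply/sub_kermxP; exact: row_sub.
    clearbody w.
    have hw i u v : (0 < y i)%N -> u \in A_ i -> v \in A_ i -> w 0 u = w 0 v.
      move=> yi uA vA.
      move/matrixP/(_ ord0 (enum_rank ((i, u, v) : T))): (w0).
      rewrite [LHS]mxE [RHS]mxE; under eq_bigr do rewrite [M^T _ _]mxE [M _ _]mxE.
      rewrite /X enum_rankK /x0 => e.
      have : \sum_l w 0 l * ((y i)%:R * (d0 i v * (ev u l - ev v l))) = 0.
        apply: etrans e; apply: eq_bigr => l _; rewrite Phi_dm /= uA vA /= mul1r.
        by congr (_ * _); ring.
      under eq_bigr do rewrite mulrA mulrA mulrDr mulrN.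
      rewrite sumrB.
      have ps (a : 'I_n) : \sum_l w 0 l * ((y i)%:R * d0 i v) * ev a l = w 0 a * ((y i)%:R * d0 i v).
        rewrite (bigD1 a) //= /ev eqxx mulr1 big1 ?addr0 // => l /negbTE ->.
        by rewrite mulr0.
      rewrite ps ps -mulrBl => /eqP; rewrite mulf_eq0 subr_eq0 => /orP [/eqP //|].
      by rewrite mulf_eq0 pnatr_eq0 eqn0Ngt yi /= gt_eqF // d0_pos.
    have hc := const_on (w := fun l => w 0 l) hw.
    have -> : w = (\row_c (if c == ord0 then w 0 k else w 0 k0)) *m BT.
      apply/rowP => l; rewrite !mxE big_ord_recl big_ord1 !mxE /= hc.
      by rewrite /bump /=.
    exact: submxMl.
  have := mxrankS sK; rewrite rank_BT mxrank_ker mxrank_tr; lia.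
have rM : \rank M = n.-2 by rewrite -subn2; apply/eqP; rewrite eqn_leq ub lb.
have [g gf] := pick_rows rM.
exists x0, (fun j => X (g j)); split=> //; split=> //.
have -> : \matrix_(j, l) (X (g j) l - x0 l) = rowsub g M.
  by apply/matrixP => j l; rewrite !mxE.
exact/eqP.
Qed.

Lemma facet_P : facet_ineq (PG E y) (ind P) (fS R E y P).
Proof.
split; first by exists k, k0; rewrite /ind kP (negbTE k0P) oner_neq0.
split; first by move=> x [d [f h]]; rewrite dotp_ind (eq_bigr _ (fun j _ => h j)); exact: VL.
split; first exact: LB.
move=> [x0 [X [Fx0 [FX rk]]]]; have := UB Fx0 FX; rewrite rk subn2.
by case: n => [|[|n']] //=; rewrite ltnn.
Qed.

End Facet.

Section Assembly.
Variables (R : realType) (m n : nat) (E : 'I_m -> 'I_n -> bool) (y : 'I_m -> nat).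

Lemma sum_ev_in (S : {set 'I_n}) u : \sum_(j in S) (ev u j : R) = (u \in S)%:R.
Proof.
case: (boolP (u \in S)) => uS.
  rewrite (bigD1 u) //= /ev eqxx big1 ?addr0 // => j /andP [_ /negbTE ->] //.
rewrite big1 // => j jS; rewrite /ev; case: (j =P u) => // ju.
by rewrite -ju jS in uS.
Qed.

Lemma sum_mv_in (S : {set 'I_n}) (x : 'I_n -> R) t u v :
  \sum_(j in S) mv x t u v j = \sum_(j in S) x j + t * ((u \in S)%:R - (v \in S)%:R).
Proof.
by rewrite /mv big_split /= -mulr_sumr sumrB !sum_ev_in.
Qed.

Lemma GC_interior z : interiorH (sumy R y) (PG E y) z ->
  conn E [set: 'I_n] (fun i => (0 < y i)%N).
Proof.
move=> hz S sS.
case: (pselect (exists u, u \in S)) => [[u uS]|]; last first.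
  by move=> h; right => j _; apply/negP => jS; apply: h; exists j.
case: (pselect (exists v, v \notin S)) => [[v vS]|]; last first.
  by move=> h; left => j _; apply/negPn/negP => jS; apply: h; exists j.
exfalso.
have fcS d : isflow E d -> fclos E y d S.
  move=> f i j yi tS dij.
  have Eij : E i j by apply: (flow_E f); rewrite gt_eqF.
  case: (sS i yi) => h; first exact: h.
  by move/touchP: tS => [j0 j0S Ej0]; have := h j0 (in_setT _) Ej0; rewrite j0S.
have key x : PG E y x -> \sum_(j in S) x j = fS R E y S.
  move=> [d [f h]]; rewrite (eq_bigr _ (fun j _ => h j)); apply: TL => //.
  exact: fcS.
have zPG := interior_in hz.
move: hz => [hzH [e [e0 he]]].
have wPG : PG E y (mv z (e / 2) u v).
  apply: he; first by rewrite /inH sum_mv.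
  move=> l; apply: le_lt_trans (mv_close _ _ _ _ _) _.
  rewrite ger0_norm; last by rewrite divr_ge0 // ltW.
  lra.
have := key _ wPG; rewrite sum_mv_in key // uS (negbTE vS) /= => h.
have : e / 2 = 0 by lra.
lra.
Qed.

Lemma fS_ge0 S : 0 <= fS R E y S.
Proof. by apply: sumr_ge0 => i _; apply: mulr_ge0; rewrite ler0n. Qed.

Lemma pos_facet (P : {set 'I_n}) (k k0 : 'I_n) c z :
  val k0 = 0%N -> k \in P -> k0 \notin P -> 0 < c ->
  interiorH (sumy R y) (PG E y) z ->
  ~ separates (infty1 (sumy R y) c) (interiorH (sumy R y) (PG E y))
      (ind R P) (fS R E y P).
Proof.
move=> hk0 kP k0P c0 hz.
have neg : dotp (ind R P) (infty1 (sumy R y) c) < 0.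
  rewrite dotp_ind (bigD1 k) //= {1}/infty1.
  have -> : (val k == 0%N) = false.
    apply/negP => /eqP h; have kk : k = k0 by apply: val_inj; rewrite /= h hk0.
    by rewrite kk (negbTE k0P) in kP.
  have : \sum_(j in P | j != k) infty1 (sumy R y) c j <= 0.
    apply: sumr_le0 => j /andP [jP _]; rewrite /infty1.
    have -> : (val j == 0%N) = false.
      apply/negP => /eqP h; have kk : j = k0 by apply: val_inj; rewrite /= h hk0.
      by rewrite kk (negbTE k0P) in jP.
    by rewrite oppr_le0 ltW.
  lra.
have zPG := interior_in hz.
move=> [[h _]|[_ h]].
  by have := fS_ge0 P; lra.
have := h z hz.
move: zPG => [d [f hd]].
have : dotp (ind R P) z <= fS R E y P.
  by rewrite dotp_ind (eq_bigr _ (fun j _ => hd j)); exact: VL.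
lra.
Qed.

Lemma convex_PG (x : 'I_n -> R) :
  (forall k, PG E y (fun j => x j + ev k j)) -> PGminus E y x.
Proof.
move=> h dd [d0 [_ dsum]].
have /choice [F hF] : forall k, exists dk, isflow E dk /\ forall j, x j + ev k j = Phi y dk j.
  by move=> k; have [dk [f e]] := h k; exists dk.
exists (fun i j => \sum_k dd k * F k i j); split.
  move=> i; split; [|split].
  - move=> j; apply: sumr_ge0 => k _; apply: mulr_ge0; first exact: d0.
    by apply: flow_ge0; exact: (hF k).1.
  - move=> j nE; apply: big1 => k _.
    by have [_ [hz _]] := (hF k).1 i; rewrite hz // mulr0.
  - rewrite exchange_big /=; rewrite -dsum; apply: eq_bigr => k _.
    by rewrite -mulr_sumr (flow_sum i (hF k).1) mulr1.
move=> j; rewrite /Phi.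
under eq_bigr do rewrite mulr_sumr.
rewrite exchange_big /=.
have -> : \sum_k \sum_i (y i)%:R * (dd k * F k i j) = \sum_k dd k * (x j + ev k j).
  apply: eq_bigr => k _; rewrite (hF k).2 /Phi mulr_sumr; apply: eq_bigr => i _.
  by rewrite mulrCA.
under eq_bigr do rewrite mulrDr.
rewrite big_split /= -mulr_suml dsum mul1r; congr (_ + _).
rewrite (bigD1 j) //= /ev eqxx mulr1 big1 ?addr0 // => k /negbTE.
by rewrite eq_sym => ->; rewrite mulr0.
Qed.

End Assembly.

Unset Implicit Arguments.

Theorem mainTheorem4 (R : realType) (m n : nat)
    (E : 'I_m -> 'I_n -> bool) (y : 'I_m -> nat) :
  (0 < m)%N -> (0 < n)%N -> no_isolated E ->
  (exists z : 'I_n -> R, interiorH (sumy R y) (PG E y) z) ->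
  exists C : R, 0 < C /\
    forall c : R, C <= c ->
    forall p : 'I_n -> int,
      PGminus E y (fun k => (p k)%:~R : R) <->
      good_point (sumy R y) (PG E y) (infty1 (sumy R y) c)
        (fun k => (p k)%:~R + (if val k == 0%N then 1 else 0)).
Proof.
move=> hm hn niso [z hz]; exists 1; split; first exact: ltr01.
move=> c c1 p.
have c0 : 0 < c by apply: lt_le_trans c1; exact: ltr01.
pose k0 : 'I_n := Ordinal hn.
have hk0 : val k0 = 0%N by [].
split; first exact: forward c0 hk0 hz.
pose pr := (fun k => (p k)%:~R : R).
have eqf : (fun k : 'I_n => pr k + (if val k == 0%N then 1 else 0)) = (fun k => pr k + ev k0 k).
  by apply: funext => j; rewrite -(ev0E R hk0).
rewrite -/pr eqf => [[qPG Hng]].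
apply: convex_PG => k.
case: (pselect (PG E y (fun j => pr j + ev k j))) => // nk; exfalso.
have kk0 : k != k0 by apply/eqP => e; apply: nk; rewrite e.
pose q := fun j => pr j + ev k0 j.
have [dq [fq qE]] := qPG.
have [t [d [/andP [t0 t1] fd hd tmax]]] := MX (q := q) fq qE kk0.
case: (eqVneq t 1) => [t1e | tn1].
  apply: nk; exists d; split => // j; have := hd j; rewrite /Phi => ->.
  by rewrite t1e /mv /q; ring.
have tl1 : t < 1 by rewrite lt_neqAle tn1 t1.
case: (pselect (reach E y d k k0)) => [rk | nrk].
  have [C [eps [C0 e0 Hp]]] := push fd rk.
  pose del := Num.min eps (1 - t).
  have del0 : 0 < del by rewrite lt_min e0 subr_gt0.
  have dle : del <= eps by rewrite ge_min lexx.
  have dle' : del <= 1 - t by rewrite ge_min lexx orbT.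
  have [d' [fd' _ hd']] := Hp del (ltW del0) dle.
  apply: (tmax (t + del) d' _ _ fd'); first by lra.
    by lra.
  by move=> j; rewrite hd' /mv hd /mv; ring.
pose T := [set j | `[< reach E y d k j >]].
have kT : k \in T by rewrite inE; apply/asboolP; exact: reach0.
have k0T : k0 \notin T by rewrite inE; apply/negP => /asboolP.
have fT : fclos E y d T.
  move=> i j yi tT dij; rewrite inE; apply/asboolP.
  move/touchP: tT => [j0]; rewrite inE => /asboolP r0 Ej0.
  exact: reachS r0 Ej0 yi dij.
have e1 := TL fd fT.
rewrite (eq_bigr _ (fun j _ => hd j)) sum_mv_in kT (negbTE k0T) subr0 mulr1 in e1.
have e2 := VL y T fq.
rewrite -(eq_bigr _ (fun j _ => qE j)) in e2.
have sq : \sum_(j in T) q j = ((\sum_(j in T) p j)%:~R : R).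
  rewrite /q big_split /= sum_ev_in (negbTE k0T) addr0.
  by rewrite (big_morph (fun z : int => z%:~R : R) (fun a b => intrD R a b) (mulr0z 1)).
have fSn : fS R E y T = (((\sum_i (y i * touch E T i))%N)%:Z)%:~R.
  by rewrite -pmulrn /fS natr_sum; apply: eq_bigr => i _; rewrite natrM.
have tz : t = ((((\sum_i (y i * touch E T i))%N)%:Z - \sum_(j in T) p j) : int)%:~R.
  by rewrite intrB -fSn -sq; lra.
have t00 : t = 0.
  move: t0 tl1; rewrite tz ler0z ltrz1 => a b.
  have -> : ((\sum_i (y i * touch E T i))%N%:Z - \sum_(j in T) p j) = 0 by lia.
  by [].
have hq j : Phi y d j = q j by rewrite hd t00 /mv mul0r addr0.
have GC := GC_interior hz.
have [P [kP k0P fP cP cK]] := find_facet fd GC kT k0T fT.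
apply: Hng; exists (ind R P), (fS R E y P); split; first split.
- exact: facet_P kP k0P niso cP cK.
- exact: pos_facet hk0 kP k0P c0 hz.
rewrite dotp_ind -(eq_bigr _ (fun j _ => hq j)); exact: TL fd fP.
Qed.
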